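(* Let $X_1,\ldots,X_n$ be $\{0,1\}$-valued random variables satisfying negative regression. Let $K\subseteq[n]$, $a_K\in\{0,1\}^K$, and $i\in[n]\setminus K$ with $\Pr[X_K=a_K,X_i=0]>0$ and $\Pr[X_K=a_K,X_i=1]>0$. Let $L=[n]\setminus(K\cup\{i\})$ and for $c\in\{0,1\}$ let $\mu^{(c)}$ be the distribution on $\{0,1\}^L$ given by $\mu^{(c)}(x)=\Pr[X_L=x\mid X_K=a_K,X_i=c]$. Then there exists a function $\nu:\{0,1\}^L\times\{0,1\}^L\to[0,1]$ such that $\mu^{(1)}(x)=\sum_{y}\nu(x,y)$ for all $x$, $\mu^{(0)}(y)=\sum_x\nu(x,y)$ for all $y$, and $\nu(x,y)=0$ unless $x\le y$ coordinatewise.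
   Context: For $S\subseteq[n]$, $X_S\in\{0,1\}^S$ denotes the tuple $(X_i)_{i\in S}$. The variables $X_1,\ldots,X_n$ satisfy negative regression if for all disjoint $I,J\subseteq[n]$, every non-decreasing function $g:\{0,1\}^I\to\mathbb{R}$, and all $a\le b$ in $\{0,1\}^J$ (coordinatewise) such that $\Pr[X_J=a]>0$ and $\Pr[X_J=b]>0$, we have $\mathbb{E}[g(X_I)\mid X_J=a]\ge \mathbb{E}[g(X_I)\mid X_J=b]$. *)

(* Defs.v *)
From HB Require Import structures.
From mathcomp Require Import all_boot all_order all_algebra.
Set Implicit Arguments. Unset Strict Implicit. Unset Printing Implicit Defensive.
Import Order.TTheory GRing.Theory Num.Theory.
Local Open Scope ring_scope.

Definition cube (n : nat) := {ffun 'I_n -> bool}.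

Definition subcube (n : nat) (S : {set 'I_n}) := {ffun {i : 'I_n | i \in S} -> bool}.

(* X_S evaluated at outcome w *)
Definition restr (n : nat) (S : {set 'I_n}) (w : cube n) : subcube S :=
  [ffun j => w (val j)].

Definition cw_le (n : nat) (S : {set 'I_n}) (x y : subcube S) : bool :=
  [forall j, x j ==> y j].

(* p is the joint probability mass function of (X_1,...,X_n) *)
Definition is_dist (R : realFieldType) (n : nat) (p : cube n -> R) : Prop :=
  (forall w, 0 <= p w) /\ \sum_(w : cube n) p w = 1.

Definition Pr (R : realFieldType) (n : nat) (p : cube n -> R) (E : pred (cube n)) : R :=
  \sum_(w : cube n | E w) p w.

Definition condE (R : realFieldType) (n : nat) (p : cube n -> R)
  (I J : {set 'I_n}) (g : subcube I -> R) (a : subcube J) : R :=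
  (\sum_(w : cube n | restr J w == a) p w * g (restr I w))
    / Pr p (fun w => restr J w == a).

Definition nondecreasing_fun (R : realFieldType) (n : nat) (I : {set 'I_n})
  (g : subcube I -> R) : Prop :=
  forall x y : subcube I, cw_le x y -> g x <= g y.

Definition negative_regression (R : realFieldType) (n : nat) (p : cube n -> R) : Prop :=
  forall (I J : {set 'I_n}), [disjoint I & J] ->
  forall (g : subcube I -> R), nondecreasing_fun g ->
  forall (a b : subcube J), cw_le a b ->
    0 < Pr p (fun w => restr J w == a) ->
    0 < Pr p (fun w => restr J w == b) ->
    condE p g b <= condE p g a.

Definition mu (R : realFieldType) (n : nat) (p : cube n -> R) (K : {set 'I_n})
  (aK : subcube K) (i : 'I_n) (c : bool) (L : {set 'I_n}) (x : subcube L) : R :=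
  Pr p (fun w => [&& restr L w == x, restr K w == aK & w i == c])
   / Pr p (fun w => (restr K w == aK) && (w i == c)).

(* Main.v *)
Require Import Defs.
From HB Require Import structures.
From mathcomp Require Import all_boot all_order all_algebra.
From mathcomp Require Import ring lra zify.
Set Implicit Arguments. Unset Strict Implicit. Unset Printing Implicit Defensive.
Import Order.TTheory GRing.Theory Num.Theory.
Local Open Scope ring_scope.
Section Gale.
Variables (R : realFieldType) (T : finType) (E : rel T).

Definition Nb (A : {set T}) : {set T} := [set y | [exists x in A, E x y]].

Definition hall (X : {set T}) (mu nu : T -> R) :=
  forall A : {set T}, A \subset X -> \sum_(x in A) mu x <= \sum_(y in Nb A) nu y.

Definition sol (X : {set T}) (mu nu : T -> R) (pi : T -> T -> R) :=
  [/\ (forall x y, 0 <= pi x y), (forall x y, ~~ E x y -> pi x y = 0),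
      (forall x, x \in X -> \sum_y pi x y = mu x),
      (forall x y, x \notin X -> pi x y = 0) &
      (forall y, \sum_x pi x y <= nu y)].

Lemma sumI (A : {set T}) (f : T -> R) :
  \sum_(x in A) f x = \sum_x (if x \in A then f x else 0).
Proof. exact: big_mkcond. Qed.

Lemma Nb_sub (A B : {set T}) : A \subset B -> Nb A \subset Nb B.
Proof.
move=> /subsetP AB; apply/subsetP=> y; rewrite !inE => /existsP [x /andP [xA e]].
by apply/existsP; exists x; rewrite AB.
Qed.

Lemma hall_sub (X X' : {set T}) mu nu : hall X mu nu -> X' \subset X -> hall X' mu nu.
Proof. by move=> h s A sA; apply: h; apply: subset_trans sA s. Qed.

Lemma sum_delta (A : {set T}) x0 (t : R) :
  \sum_(x in A) (if x == x0 then t else 0) = if x0 \in A then t else 0.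
Proof.
case: ifP => h.
  rewrite (bigD1 x0) //= eqxx big1 ?addr0 // => x /andP [_ /negbTE ->] //.
by apply: big1 => x xA; case: eqP => // e; rewrite -e xA in h.
Qed.

Lemma sum_shift (A : {set T}) (f : T -> R) x0 t :
  \sum_(x in A) (if x == x0 then f x - t else f x) =
  \sum_(x in A) f x - (if x0 \in A then t else 0).
Proof.
rewrite -sum_delta -sumrB; apply: eq_bigr => x _; case: eqP => _; lra.
Qed.

Lemma sol_ext (X : {set T}) x0 mu nu pi : x0 \in X -> mu x0 = 0 ->
  sol (X :\ x0) mu nu pi -> sol X mu nu pi.
Proof.
move=> x0X m0 [h1 h2 h3 h4 h5]; split=> //.
  move=> x xX; case: (eqVneq x x0) => [->|ne].
    by rewrite m0 big1 // => y _; apply: h4; rewrite !inE eqxx.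
  by apply: h3; rewrite !inE ne.
by move=> x y xX; apply: h4; rewrite !inE negb_and xX orbT.
Qed.

Lemma sol_lift (X : {set T}) x0 y mu nu pi (t : R) : x0 \in X -> E x0 y -> 0 <= t ->
  sol X (fun x => if x == x0 then mu x - t else mu x)
        (fun z => if z == y then nu z - t else nu z) pi ->
  sol X mu nu (fun x z => pi x z + (if (x == x0) && (z == y) then t else 0)).
Proof.
move=> x0X e t0 [h1 h2 h3 h4 h5]; split.
- by move=> x z; have := h1 x z; case: ifP => _; lra.
- move=> x z ne; rewrite h2 // add0r; case: ifP => // /andP [/eqP ex /eqP ez].
  by rewrite ex ez e in ne.
- move=> x xX; rewrite big_split /= h3 //.
  case: (eqVneq x x0) => [->|ne] /=.
    have -> : \sum_z (if z == y then t else 0) = t.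
      by rewrite (bigD1 y) //= eqxx big1 ?addr0 // => z /negbTE ->.
    lra.
  by rewrite big1 ?addr0.
- move=> x z xX; rewrite h4 //; case: eqP => [ex|]; last by rewrite add0r.
  by rewrite ex x0X in xX.
- move=> z; rewrite big_split /=.
  have -> : \sum_x (if (x == x0) && (z == y) then t else 0) =
            if z == y then t else 0.
    case: eqP => _; last by rewrite big1 // => x; rewrite andbF.
    by rewrite (bigD1 x0) //= eqxx big1 ?addr0 // => x /negbTE ->.
  by have := h5 z; case: ifP => _; lra.
Qed.

Definition nu1 (A : {set T}) (nu : T -> R) y := if y \in Nb A then nu y else 0.
Definition nu2 (A : {set T}) (nu : T -> R) y := if y \in Nb A then 0 else nu y.

Lemma hall_split1 (X A : {set T}) mu nu : hall X mu nu -> A \subset X -> hall A mu (nu1 A nu).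
Proof.
move=> h sA B sB; have := h B (subset_trans sB sA).
have /subsetP NB := Nb_sub sB.
suff -> : \sum_(y in Nb B) nu1 A nu y = \sum_(y in Nb B) nu y by [].
apply: eq_bigr => y /NB; rewrite /nu1 => -> //.
Qed.

Lemma NbU (A B : {set T}) y : (y \in Nb (A :|: B)) = (y \in Nb A) || (y \in Nb B).
Proof.
rewrite !inE; apply/existsP/orP.
  by move=> [x /andP []]; rewrite inE => /orP [] xa e; [left|right];
     apply/existsP; exists x; rewrite xa.
by move=> [] /existsP [x /andP [xa e]]; exists x; rewrite inE xa ?orbT.
Qed.

Lemma hall_split2 (X A : {set T}) mu nu : hall X mu nu -> A \subset X ->
  \sum_(x in A) mu x = \sum_(y in Nb A) nu y -> hall (X :\: A) mu (nu2 A nu).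
Proof.
move=> h sA tight B sB.
have sAB : A :|: B \subset X.
  by rewrite subUset sA (subset_trans sB) // subsetDl.
have := h _ sAB.
have e1 : \sum_(x in A :|: B) mu x = \sum_(x in A) mu x + \sum_(x in B) mu x.
  rewrite !sumI -big_split; apply: eq_bigr => x _ /=.
  rewrite inE; case xA: (x \in A); case xB: (x \in B) => //=; try lra.
  by move/subsetP: sB => /(_ _ xB); rewrite inE xA.
have e2 : \sum_(y in Nb (A :|: B)) nu y =
          \sum_(y in Nb A) nu y + \sum_(y in Nb B) nu2 A nu y.
  rewrite !sumI -big_split; apply: eq_bigr => y _ /=.
  rewrite NbU /nu2; case: (y \in Nb A); case: (y \in Nb B) => //=; lra.
rewrite e1 e2 tight; lra.
Qed.

Lemma sol_split (X A : {set T}) mu nu pi1 pi2 : A \subset X ->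
  sol A mu (nu1 A nu) pi1 -> sol (X :\: A) mu (nu2 A nu) pi2 ->
  sol X mu nu (fun x y => pi1 x y + pi2 x y).
Proof.
move=> sA [a1 a2 a3 a4 a5] [b1 b2 b3 b4 b5]; split.
- by move=> x y; have := a1 x y; have := b1 x y; lra.
- by move=> x y e; rewrite a2 // b2 // addr0.
- move=> x xX; rewrite big_split /=; case xA: (x \in A).
    by rewrite a3 // big1 ?addr0 // => y _; apply: b4; rewrite inE xA.
  by rewrite b3 ?inE ?xA ?xX // big1 ?add0r // => y _; apply: a4; rewrite xA.
- move=> x y xX; rewrite b4 ?a4 ?addr0 //; last by rewrite inE negb_and xX orbT.
  by apply: contra xX; apply/subsetP.
- move=> y; rewrite big_split /=; have := a5 y; have := b5 y.
  rewrite /nu1 /nu2; case: ifP => _; lra.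
Qed.


Definition mn (a b : R) := if a <= b then a else b.

Lemma mn_le_l a b : mn a b <= a.
Proof. by rewrite /mn; case: ifP => // /negbT; rewrite -ltNge => /ltW. Qed.
Lemma mn_le_r a b : mn a b <= b.
Proof. by rewrite /mn; case: ifP. Qed.

Lemma bigmn_le (I : eqType) (r : seq I) (P : pred I) (F : I -> R) d a :
  a \in r -> P a -> \big[mn/d]_(i <- r | P i) F i <= F a.
Proof.
elim: r => // b r IHr; rewrite inE big_cons => /orP [/eqP <- ->|ar Pa].
  exact: mn_le_l.
case: ifP => _; last exact: IHr.
exact: le_trans (mn_le_r _ _) (IHr ar Pa).
Qed.

Lemma bigmn_le_d (I : Type) (r : seq I) (P : pred I) (F : I -> R) d :
  \big[mn/d]_(i <- r | P i) F i <= d.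
Proof.
elim: r => [|b r IHr]; first by rewrite big_nil.
rewrite big_cons; case: ifP => _ //; exact: le_trans (mn_le_r _ _) IHr.
Qed.

Definition slack (mu nu : T -> R) (A : {set T}) := \sum_(z in Nb A) nu z - \sum_(x in A) mu x.

Lemma hall_transfer (X : {set T}) x0 y mu nu (t : R) : x0 \in X -> E x0 y ->
  hall X mu nu ->
  (forall A : {set T}, A \subset X :\ x0 -> y \in Nb A -> t <= slack mu nu A) ->
  hall X (fun x => if x == x0 then mu x - t else mu x)
         (fun z => if z == y then nu z - t else nu z).
Proof.
move=> x0X e h hs B sB; rewrite !sum_shift; have hB := h B sB.
case x0B: (x0 \in B).
  have -> : y \in Nb B by rewrite inE; apply/existsP; exists x0; rewrite x0B.
  lra.
have sB' : B \subset X :\ x0.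
  apply/subsetP => x xB; rewrite !inE (subsetP sB) // andbT.
  by apply: contraTneq xB => ->; rewrite x0B.
case yB: (y \in Nb B); last lra.
have := hs B sB' yB; rewrite /slack; lra.
Qed.

Definition supp (nu : T -> R) : {set T} := [set y | nu y != 0].

Lemma sol0 mu nu : (forall y, 0 <= nu y) -> sol set0 mu nu (fun _ _ => 0).
Proof.
move=> n0; split=> //.
- by move=> x; rewrite inE.
- by move=> y; rewrite big1.
Qed.

Lemma supp_sub_shift nu y (t : R) : 0 < nu y ->
  supp (fun z => if z == y then nu z - t else nu z) \subset supp nu.
Proof.
move=> ny; apply/subsetP => z; rewrite !inE /=; case: (eqVneq z y) => [->|] //.
by rewrite (gt_eqF ny).
Qed.

Lemma supp_nu1 A nu : supp (nu1 A nu) \subset supp nu.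
Proof. by apply/subsetP => z; rewrite !inE /nu1; case: ifP; rewrite ?eqxx. Qed.
Lemma supp_nu2 A nu : supp (nu2 A nu) \subset supp nu.
Proof. by apply/subsetP => z; rewrite !inE /nu2; case: ifP; rewrite ?eqxx. Qed.

Lemma arith a b c d e k : (a + b <= k.+1)%N -> (c < a)%N -> (d <= e)%N ->
  (e <= b)%N -> (c + d <= k)%N.
Proof. lia. Qed.

Lemma gale k : forall (X : {set T}) (mu nu : T -> R),
  (#|X| + #|supp nu| <= k)%N -> (forall x, 0 <= mu x) -> (forall y, 0 <= nu y) ->
  hall X mu nu -> exists pi, sol X mu nu pi.
Proof.
elim: k => [|k IH] X mu nu hk m0 n0 h.
  have : #|X| == 0%N by move: hk; rewrite leqn0 addn_eq0 => /andP [].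
  by rewrite cards_eq0 => /eqP ->; exists (fun _ _ => 0); apply: sol0.
case: (set_0Vmem X) => [->|[x0 x0X]].
  by exists (fun _ _ => 0); apply: sol0.
have cX0 : (#|X :\ x0| < #|X|)%N by rewrite (cardsD1 x0 X) x0X.
have cXpos : (0 < #|X|)%N by apply/card_gt0P; exists x0.
case: (eqVneq (mu x0) 0) => [mx0|mx0].
  have [pi hpi] : exists pi, sol (X :\ x0) mu nu pi.
    apply: IH => //; first exact: arith hk cX0 (leqnn _) (leqnn _).
    by apply: hall_sub h _; apply: subsetDl.
  by exists pi; apply: sol_ext hpi.
have mx0p : 0 < mu x0 by rewrite lt_def mx0 m0.
have /existsP [y /andP [e ny]] : [exists y, E x0 y && (0 < nu y)].
  apply: contraT; rewrite negb_exists => /forallP hn.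
  have := h [set x0]; rewrite sub1set x0X big_set1.
  rewrite big1 => [H|z]; first by have := H isT; lra.
  rewrite inE => /existsP [x /andP [/set1P -> ez]].
  have := hn z; rewrite ez /= -leNgt => hz; apply/eqP; rewrite eq_le hz n0 //.
pose S := [set A : {set T} | (A \subset X :\ x0) && (y \in Nb A)].
pose m1 := mn (mu x0) (nu y).
pose t := \big[mn/m1]_(A in S) slack mu nu A.
have slack0 : forall A, A \in S -> 0 <= slack mu nu A.
  move=> A; rewrite inE => /andP [sA _]; rewrite /slack subr_ge0; apply: h.
  exact: subset_trans sA (subsetDl _ _).
have ht1 : t <= m1.
  exact: bigmn_le_d.
have ht2 : forall A, A \in S -> t <= slack mu nu A.
  by move=> A AS; apply: bigmn_le => //; apply: mem_index_enum.
have ht0 : 0 <= t.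
  apply: (big_ind (fun v => 0 <= v)) => //.
    by rewrite /m1 /mn; case: ifP => _; apply/ltW.
  by move=> a b ha hb; rewrite /mn; case: ifP.
have ht3 : t = m1 \/ exists2 A, A \in S & t = slack mu nu A.
  apply: (big_ind (fun v => v = m1 \/ exists2 A, A \in S & v = slack mu nu A)).
  - by left.
  - by move=> a b ha hb; rewrite /mn; case: ifP.
  - by move=> A AS; right; exists A.
have hm1a := mn_le_l (mu x0) (nu y); have hm1b := mn_le_r (mu x0) (nu y).
pose mu' := fun x => if x == x0 then mu x - t else mu x.
pose nu' := fun z => if z == y then nu z - t else nu z.
have m0' : forall x, 0 <= mu' x.
  by move=> x; rewrite /mu'; case: eqP => [->|_] //; rewrite subr_ge0;
    exact: le_trans ht1 hm1a.
have n0' : forall z, 0 <= nu' z.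
  by move=> z; rewrite /nu'; case: eqP => [->|_] //; rewrite subr_ge0;
    exact: le_trans ht1 hm1b.
have h' : hall X mu' nu'.
  by apply: hall_transfer => // A sA yA; apply: ht2; rewrite inE sA yA.
have ssupp : supp nu' \subset supp nu by apply: supp_sub_shift.
have csupp := subset_leq_card ssupp.
suff [pi hpi] : exists pi, sol X mu' nu' pi.
  have := sol_lift x0X e ht0 hpi => hh.
  by eexists; exact: hh.
case: ht3 => [tm1|[Z0 AS tA]].
  move: tm1; rewrite /m1 /mn; case: ifP => _ tm.
    have mx0' : mu' x0 = 0 by rewrite /mu' eqxx tm subrr.
    have [pi hpi] : exists pi, sol (X :\ x0) mu' nu' pi.
      apply: IH => //; first exact: arith hk cX0 (leqnn _) csupp.
      by apply: hall_sub h' _; apply: subsetDl.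
    by exists pi; apply: sol_ext hpi.
  have pr : supp nu' \proper supp nu.
    apply/properP; split=> //; exists y.
      by rewrite inE gt_eqF.
    by rewrite inE /nu' /= eqxx tm subrr eqxx.
  have := proper_card pr => cp.
  apply: IH => //; move: hk cp; clear; lia.
move: AS; rewrite inE => /andP [sA yA].
have sAX : Z0 \subset X := subset_trans sA (subsetDl _ _).
have x0A : x0 \notin Z0 by apply: contraTN sA => x0A; apply/subsetPn; exists x0;
  rewrite // !inE eqxx.
have tight : \sum_(x in Z0) mu' x = \sum_(y in Nb Z0) nu' y.
  rewrite /mu' /nu' !sum_shift (negbTE x0A) yA; move: tA; rewrite /slack; lra.
have cA : (#|Z0| < #|X|)%N.
  apply: proper_card; apply/properP; split=> //; by exists x0.
have [x1 x1A] : exists x1, x1 \in Z0.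
  move: yA; rewrite inE => /existsP [x1 /andP [x1A _]]; by exists x1.
have cXA : (#|X :\: Z0| < #|X|)%N.
  apply: proper_card; apply/properP; split; first by apply: subsetDl.
  by exists x1; rewrite ?inE ?x1A // (subsetP sAX).
have c1 := subset_leq_card (supp_nu1 Z0 nu').
have c2 := subset_leq_card (supp_nu2 Z0 nu').
have [pi1 h1] : exists pi, sol Z0 mu' (nu1 Z0 nu') pi.
  apply: IH => //; first exact: arith hk cA c1 csupp.
  - by move=> z; rewrite /nu1; case: ifP.
  - exact: hall_split1 h' sAX.
have [pi2 h2] : exists pi, sol (X :\: Z0) mu' (nu2 Z0 nu') pi.
  apply: IH => //; first exact: arith hk cXA c2 csupp.
  - by move=> z; rewrite /nu2; case: ifP.
  - exact: hall_split2 h' sAX tight.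
by exists (fun x z => pi1 x z + pi2 x z); apply: sol_split h1 h2.
Qed.

End Gale.


Section App.
Variables (R : realFieldType) (n : nat) (p : cube n -> R).
Hypothesis Hp : is_dist p.
Variables (K : {set 'I_n}) (aK : subcube K) (i : 'I_n).
Hypothesis HiK : i \notin K.

Let J := i |: K.
Let L := ~: J.

Definition fK (k : 'I_n) : bool :=
  if (insub k : option {k : 'I_n | k \in K}) is Some k' then aK k' else false.

Definition aJ (c : bool) : subcube J :=
  [ffun j : {j : 'I_n | j \in J} => if val j == i then c else fK (val j)].

Lemma evJ w c : (restr J w == aJ c) = (restr K w == aK) && (w i == c).
Proof.
apply/eqP/andP.
  move=> H; split.
    apply/eqP/ffunP => k; rewrite ffunE.
    have kJ : val k \in J by apply: setU1r; apply: (valP k).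
    have := congr1 (fun f : subcube J => f (Sub (val k) kJ)) H.
    rewrite /restr /aJ !ffunE /=.
    have -> : (val k == i) = false.
      by apply/eqP => e; move: HiK; rewrite -e (valP k).
    rewrite /fK => ->; case: insubP => [k' _ ek'|]; last by rewrite (valP k).
    by congr (aK _); apply: val_inj.
  have iJ : i \in J by apply: setU11.
  have := congr1 (fun f : subcube J => f (Sub i iJ)) H.
  by rewrite /restr /aJ !ffunE /= eqxx => ->.
move=> [/eqP H1 /eqP H2]; apply/ffunP => j; rewrite /aJ /restr !ffunE.
case: eqP => [->|ne] //.
have : val j \in K.
  by have := valP j; case/setU1P => [e|] //; case: ne.
move=> jK; rewrite /fK; case: insubP => [k' _ ek'|]; last by rewrite jK.
by rewrite -H1 /restr ffunE ek'.
Qed.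

Lemma aJ_le : cw_le (aJ false) (aJ true).
Proof.
by apply/forallP => j; rewrite /aJ !ffunE; case: ifP => _ //; rewrite implybb.
Qed.

Lemma Pr_ge0 (P : pred (cube n)) : 0 <= Pr p P.
Proof. by apply: sumr_ge0 => w _; case: Hp. Qed.

Definition mc (c : bool) (x : subcube L) := mu p aK i c x.

Lemma mc_ge0 c x : 0 <= mc c x.
Proof. by rewrite /mc /mu divr_ge0 // Pr_ge0. Qed.

Hypothesis Hpos : forall c, 0 < Pr p (fun w => (restr K w == aK) && (w i == c)).

Lemma sum_mc_set (U : {set subcube L}) c :
  \sum_(x in U) mc c x =
  (\sum_(w | (restr K w == aK) && (w i == c)) p w * (if restr L w \in U then 1 else 0))
  / Pr p (fun w => (restr K w == aK) && (w i == c)).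
Proof.
rewrite /mc /mu -mulr_suml; congr (_ * _).
transitivity (\sum_(w | ((restr K w == aK) && (w i == c)) && (restr L w \in U)) p w).
  rewrite (partition_big (fun w => restr L w) (fun x => x \in U)) /=;
    last by move=> w /andP [].
  apply: eq_bigr => x xU; rewrite /Pr; apply: eq_bigl => w.
  by case: eqP => [->|]; rewrite ?xU ?andbT ?andbF.
rewrite big_mkcondr /=; apply: eq_bigr => w _.
by case: ifP; rewrite ?mulr1 ?mulr0.
Qed.

Hypothesis Hnr : negative_regression p.

Lemma upset_le (U : {set subcube L}) :
  (forall x y, cw_le x y -> x \in U -> y \in U) ->
  \sum_(x in U) mc true x <= \sum_(x in U) mc false x.
Proof.
move=> hU.
have dis : [disjoint L & J] by rewrite -setI_eq0 setIC setICr.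
pose g := fun x : subcube L => if x \in U then (1 : R) else 0.
have gnd : nondecreasing_fun g.
  move=> x y le; rewrite /g; case: ifP => xU; first by rewrite (hU x y le xU).
  by case: ifP.
have ev c : Pr p (fun w => restr J w == aJ c) =
            Pr p (fun w => (restr K w == aK) && (w i == c)).
  by apply: eq_bigl => w; rewrite evJ.
have := Hnr dis gnd aJ_le; rewrite !ev => /(_ (Hpos false) (Hpos true)).
rewrite /condE !ev !sum_mc_set.
have ex c : \sum_(w | restr J w == aJ c) p w * g (restr L w) =
    \sum_(w | (restr K w == aK) && (w i == c)) p w *
       (if restr L w \in U then 1 else 0).
  by apply: eq_bigl => w; rewrite evJ.
by rewrite !ex.
Qed.

Lemma sum_mc c : \sum_x mc c x = 1.
Proof.
have := sum_mc_set setT c.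
have -> : \sum_(x in setT) mc c x = \sum_x mc c x by apply: eq_bigl => x; rewrite inE.
move=> ->; rewrite -[X in X / _]mulr1.
have -> : \sum_(w | (restr K w == aK) && (w i == c)) p w *
            (if restr L w \in setT then 1 else 0) =
          Pr p (fun w => (restr K w == aK) && (w i == c)).
  by apply: eq_bigr => w _; rewrite inE mulr1.
by rewrite mulr1 divff // gt_eqF.
Qed.

Lemma le_sum_part (I : finType) (F : I -> R) j :
  (forall k, 0 <= F k) -> F j <= \sum_k F k.
Proof.
move=> h; rewrite (bigD1 j) //= -[leLHS]addr0 lerD2l.
by apply: sumr_ge0.
Qed.

Lemma coupling : exists nu : subcube L -> subcube L -> R,
    (forall x y, 0 <= nu x y <= 1) /\
    (forall x, mc true x = \sum_y nu x y) /\
    (forall y, mc false y = \sum_x nu x y) /\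
    (forall x y, ~~ cw_le x y -> nu x y = 0).
Proof.
have hall0 : hall (fun x y : subcube L => cw_le x y) setT (mc true) (mc false).
  move=> A _.
  have refl : forall x : subcube L, cw_le x x.
    by move=> x; apply/forallP => j; rewrite implybb.
  apply: le_trans (upset_le _).
    rewrite !sumI; apply: ler_sum => x _; case: ifP => xA.
      by have -> : x \in Nb (fun x y : subcube L => cw_le x y) A
        by rewrite inE; apply/existsP; exists x; rewrite xA refl.
    by case: ifP => _ //; apply: mc_ge0.
  move=> x y le; rewrite !inE => /existsP [z /andP [zA zx]].
  apply/existsP; exists z; rewrite zA /=; apply/forallP => j.
  move/forallP: zx => /(_ j); move/forallP: le => /(_ j).
  by case: (z j); case: (x j); case: (y j).
have [pi [h1 h2 h3 h4 h5]] := gale (leqnn _) (@mc_ge0 true) (@mc_ge0 false) hall0.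
have rows : forall x, \sum_y pi x y = mc true x by move=> x; apply: h3; rewrite inE.
have cols : forall y, \sum_x pi x y = mc false y.
  have z0 : \sum_y (mc false y - \sum_x pi x y) = 0.
    rewrite sumrB sum_mc exchange_big /=.
    by rewrite (eq_bigr _ (fun x _ => rows x)) sum_mc subrr.
  have hF : forall z, predT z -> 0 <= mc false z - \sum_x pi x z.
    by move=> z _; rewrite subr_ge0.
  move=> y; apply/eqP; rewrite eq_sym -subr_eq0; apply/eqP.
  exact: (psumr_eq0P hF z0).
exists pi; split; last split; last split.
- move=> x y; rewrite h1 /=; apply: le_trans (le_sum_part y (h1 x)) _.
  rewrite rows; rewrite -(sum_mc true); apply: le_sum_part => k; apply: mc_ge0.
- by move=> x; rewrite rows.
- by move=> y; rewrite cols.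
- exact: h2.
Qed.

End App.

Theorem mainTheorem3 (R : realFieldType) (n : nat) (p : cube n -> R)
  (Hp : is_dist p) (Hnr : negative_regression p)
  (K : {set 'I_n}) (aK : subcube K) (i : 'I_n) (HiK : i \notin K)
  (H0 : 0 < Pr p (fun w => (restr K w == aK) && (w i == false)))
  (H1 : 0 < Pr p (fun w => (restr K w == aK) && (w i == true))) :
  exists nu : subcube (~: (i |: K)) -> subcube (~: (i |: K)) -> R,
    (forall x y, 0 <= nu x y <= 1) /\
    (forall x, mu p aK i true x = \sum_y nu x y) /\
    (forall y, mu p aK i false y = \sum_x nu x y) /\
    (forall x y, ~~ cw_le x y -> nu x y = 0).
Proof.
have Hpos : forall c, 0 < Pr p (fun w => (restr K w == aK) && (w i == c)).
  by case.
exact: (coupling Hp HiK Hpos Hnr).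
Qed.
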